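(* Let $n_0$ be a positive integer satisfying: 1. every subgroup of index a power of two of any insolvable group of order $n_0$ is insolvable; 2. there is no non-abelian simple group of order $2^r\cdot n_0$ for any integer $r\ge1$; 3. if $n_0$ is even, then $n_0/2$ is a solvable number; 4. for every odd prime $p$ dividing $n_0$ and every integer $r\ge0$, the number $(2^r\cdot n_0)/p$ is solvable. Then for every integer $r\ge0$: (i) every subgroup of index a power of two of any insolvable group of order $2^r\cdot n_0$ is insolvable; (ii) every insolvable group of order $2^r\cdot n_0$ has a non-abelian composition factor of order $n_0$.
   Context: A positive integer $n$ is called solvable if every group of order $n$ is solvable. *)

(* Defs.v *)
From mathcomp Require Import all_boot all_fingroup all_solvable.
Set Implicit Arguments. Unset Strict Implicit. Unset Printing Implicit Defensive.
Local Open Scope group_scope.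

Definition solvable_number (n : nat) : Prop :=
  forall (gT : finGroupType) (G : {group gT}), #|G| = n -> solvable G.

Definition pow2_index_insolvable (n : nat) : Prop :=
  forall (gT : finGroupType) (G H : {group gT}),
    #|G| = n -> ~~ solvable G -> H \subset G ->
    (exists k, #|G : H| = (2 ^ k)%N) -> ~~ solvable H.

Definition exists_nonabelian_simple (m : nat) : Prop :=
  exists (gT : finGroupType) (G : {group gT}),
    [/\ #|G| = m, simple G & ~~ abelian G].

(* G has a non-abelian composition factor of order m: for some composition
   series G = G_0 > G_1 > ... > G_k = 1 (mathcomp's [comps]), some factor
   G_i / G_{i+1} is non-abelian of order m. *)
Definition has_nonabelian_comp_factor (gT : finGroupType) (G : {group gT})
    (m : nat) : Prop :=
  exists s : seq {group gT}, comps G s /\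
    exists2 i, i < size s &
      let A := nth G (G :: s) i in
      let B := nth G s i in
      ~~ abelian (A / B) /\ #|A / B| = m.

(* Main.v *)
Require Import Defs.
From mathcomp Require Import all_boot all_fingroup all_solvable zmodp zify.
Local Open Scope group_scope.
Lemma sn_dvd m d : 0 < m -> solvable_number m -> d %| m -> solvable_number d.
Proof.
move=> m0 sm dm gT K cK.
have k0 : 0 < m %/ d.
  rewrite divn_gt0; last by rewrite -cK cardG_gt0.
  by apply: dvdn_leq.
pose Z := Zp (m %/ d).
have cZ : #|Z| = m %/ d by apply: card_Zp.
have cX : #|setX K Z| = m.
  by rewrite cardsX cZ cK mulnC divnK.
have solX := sm _ (setX_group K Z) cX.
have iso : K \isog setX_group K (1%G : {group [the finGroupType of 'Z_(m %/ d)]}) by apply: isog_setX1.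
rewrite (isog_sol iso).
apply: solvableS solX.
by rewrite setXS ?sub1G.
Qed.

Lemma odd_dvd p r n : prime p -> odd p -> p %| 2^r * n -> p %| n.
Proof.
move=> pp op; rewrite Euclid_dvdM // Euclid_dvdX // => /orP[/andP[p2 _]|//].
have := dvdn_leq (isT : 0 < 2) p2; have := prime_gt1 pp.
by case: p pp op {p2} => [|[|[|p]]].
Qed.

Lemma core n0 r (gT : finGroupType) (G : {group gT}) : 0 < n0 ->
  (forall r : nat, 1 <= r -> ~ exists_nonabelian_simple (2 ^ r * n0)%N) ->
  (~~ odd n0 -> solvable_number (n0 %/ 2)) ->
  (forall p r : nat, prime p -> odd p -> p %| n0 ->
      solvable_number ((2 ^ r * n0)%N %/ p)) ->
  #|G| = (2 ^ r * n0)%N -> ~~ solvable G ->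
  exists N : {group gT}, [/\ N <| G, maxnormal N G G &
  ((exists r', r = r'.+1 /\ #|N| = (2^r' * n0)%N /\ ~~ solvable N) \/
   (#|G / N| = n0 /\ ~~ solvable (G / N)))].
Proof.
move=> n0p h2 h3 h4 cG nsolG.
have ntG : G :!=: 1.
  by apply: contra nsolG => /eqP ->; apply: solvable1.
have [N maxN] := ex_maxnormal_ntrivg ntG.
have nsNG := maxnormal_normal maxN.
have simQ : simple (G / N) by rewrite quotient_simple.
have cQ : (#|N| * #|(G / N)%g| = 2 ^ r * n0)%N.
  by rewrite card_quotient ?normal_norm // Lagrange ?normal_sub.
have eso := series_sol nsNG; rewrite (negbTE nsolG) in eso.
exists N; split=> //.
set q := #|N| in cQ eso *; set d := #|G / N| in cQ *.
have q0 : 0 < q by apply: cardG_gt0.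
have d0 : 0 < d by apply: cardG_gt0.
have [solQ | nsolQ] := boolP (solvable (G / N)).
  have nsolN : ~~ solvable N by move: eso; rewrite solQ andbT => <-.
  left.
  have pd : prime d by apply: simple_sol_prime.
  have [d2 | od] := even_prime pd.
    rewrite d2 in cQ.
    case: r cG cQ => [|r'] cG cQ.
      rewrite expn0 mul1n in cQ.
      exfalso; move: nsolN; rewrite h3 //.
        by rewrite -cQ muln2 odd_double.
      by rewrite -cQ mulnK.
    exists r'; split=> //; split=> //.
    by apply/eqP; rewrite -(eqn_pmul2l (isT : 0 < 2)) mulnA -expnS -cQ mulnC.
  exfalso; move: nsolN; rewrite (h4 d r) //.
    by apply: (@odd_dvd d r); rewrite // -cQ dvdn_mull.
  by rewrite -cQ mulnK ?prime_gt0.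
right; split=> //.
have p2 : 2.-nat q.
  apply/pnatP => // p pp pq; rewrite inE; apply/negPn/negP => np2.
  have op : odd p by case: (even_prime pp) np2 => [->|] //.
  have pn : p %| n0 by apply: (@odd_dvd p r); rewrite // -cQ dvdn_mulr.
  move: nsolQ; apply/negP/negPn; apply: (@sn_dvd _ d _ (h4 p r pp op pn) _ _ (G / N)%G) => //.
    rewrite -cQ -(divnK pq) mulnAC (mulnK _ (prime_gt0 pp)) // muln_gt0 d0 andbT.
    by rewrite divn_gt0 ?prime_gt0 // dvdn_leq.
  by rewrite -cQ -(divnK pq) mulnAC (mulnK _ (prime_gt0 pp)) dvdn_mull.
have qE : q = (2 ^ logn 2 q)%N by rewrite -p_part part_pnat_id.
set s := logn 2 q in qE.
rewrite qE in cQ.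
have [sr | rs] := leqP s r.
  have e : d = (2 ^ (r - s) * n0)%N.
    apply/eqP; rewrite -(eqn_pmul2l (expn_gt0 2 s)) cQ mulnA -expnD subnKC //.
  case E : (r - s) => [|t]; first by rewrite e E mul1n.
  exfalso; apply: (h2 t.+1 isT); exists _, (G / N)%G; split=> //.
    by rewrite -E -e.
  by apply: contra nsolQ; apply: abelian_sol.
exfalso.
have e : (2 ^ (s - r) * d = n0)%N.
  apply/eqP; rewrite -(eqn_pmul2l (expn_gt0 2 r)) mulnA -expnD (subnKC (ltnW rs)).
  by rewrite cQ.
case E : (s - r) => [|t]; first by move: rs; rewrite -subn_gt0 E.
rewrite E expnS -mulnA in e.
have hodd : ~~ odd n0 by rewrite -e oddM.
have hm : (n0 %/ 2 = 2 ^ t * d)%N by rewrite -e mulKn.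
move: nsolQ; apply/negP/negPn.
apply: (@sn_dvd (n0 %/ 2) d _ (h3 hodd) _ _ (G / N)%G erefl).
- by rewrite hm muln_gt0 expn_gt0.
- by rewrite hm dvdn_mull.
Qed.

Lemma step n0 r : 0 < n0 ->
  pow2_index_insolvable n0 ->
  (forall r : nat, 1 <= r -> ~ exists_nonabelian_simple (2 ^ r * n0)%N) ->
  (~~ odd n0 -> solvable_number (n0 %/ 2)) ->
  (forall p r : nat, prime p -> odd p -> p %| n0 ->
      solvable_number ((2 ^ r * n0)%N %/ p)) ->
  (forall r', r = r'.+1 ->
    pow2_index_insolvable (2 ^ r' * n0)%N /\
    (forall (gT : finGroupType) (G : {group gT}),
        #|G| = (2 ^ r' * n0)%N -> ~~ solvable G ->
        has_nonabelian_comp_factor G n0)) ->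
    pow2_index_insolvable (2 ^ r * n0)%N /\
    (forall (gT : finGroupType) (G : {group gT}),
        #|G| = (2 ^ r * n0)%N -> ~~ solvable G ->
        has_nonabelian_comp_factor G n0).
Proof.
move=> n0p h1 h2 h3 h4 IH; split.
  move=> gT G H cG nsolG sHG [k ik].
  have [N [nsNG maxN [[r' [er [cN nsolN]]] | [cQ nsolQ]]]] := @core n0 r _ G n0p h2 h3 h4 cG nsolG.
    have [IHi _] := IH r' er.
    have nHN : H \subset 'N(N) by apply: subset_trans sHG (normal_norm nsNG).
    have iNH : #|N : N :&: H| %| (2 ^ k)%N.
      rewrite indexgI -indexMg -norm_joinEl //.
      have : #|H <*> N : H| %| #|G : H|.
        apply: indexSg; first exact: joing_subl.
        by rewrite join_subG sHG normal_sub.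
      by rewrite ik.
    have /(@dvdn_pfactor 2 _ _ isT) [k' _ ek'] := iNH.
    have := IHi _ N (N :&: H)%G cN nsolN (subsetIl _ _) (ex_intro _ k' ek').
    by apply: contra; apply: solvableS; apply: subsetIr.
  have iQ : #|(G / N)%g : (H / N)%g| %| (2 ^ k)%N.
    rewrite -ik; apply: index_quotient.
    by apply: subset_trans (subsetIl _ _) (normal_norm nsNG).
  have /(@dvdn_pfactor 2 _ _ isT) [k' _ ek'] := iQ.
  have := h1 _ (G / N)%G (H / N)%G cQ nsolQ (quotientS _ sHG) (ex_intro _ k' ek').
  by apply: contra; apply: quotient_sol.
move=> gT G cG nsolG.
have [N [nsNG maxN [[r' [er [cN nsolN]]] | [cQ nsolQ]]]] := @core n0 r _ G n0p h2 h3 h4 cG nsolG.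
  have [_ IHii] := IH r' er.
  have [s [cs [i lti [na ci]]]] := IHii _ N cN nsolN.
  exists (N :: s); split.
    have /compsP [ls ps] := cs.
    by apply/compsP; split=> //=; rewrite ps andbT.
  exists i.+1 => //=.
  have e1 : nth G (N :: s) i = nth N (N :: s) i.
    by apply: set_nth_default; rewrite /= ltnS ltnW.
  have e2 : nth G s i = nth N s i by apply: set_nth_default.
  by rewrite e1 e2.
have [s cs] := exists_comps N.
exists (N :: s); split.
  have /compsP [ls ps] := cs.
  by apply/compsP; split=> //=; rewrite ps andbT.
exists 0 => //=; split=> //.
by apply: contra nsolQ; apply: abelian_sol.
Qed.

Theorem lemma5p2 (n0 : nat) :
  0 < n0 ->
  pow2_index_insolvable n0 ->
  (forall r : nat, 1 <= r -> ~ exists_nonabelian_simple (2 ^ r * n0)%N) ->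
  (~~ odd n0 -> solvable_number (n0 %/ 2)) ->
  (forall p r : nat, prime p -> odd p -> p %| n0 ->
      solvable_number ((2 ^ r * n0)%N %/ p)) ->
  forall r : nat,
    pow2_index_insolvable (2 ^ r * n0)%N /\
    (forall (gT : finGroupType) (G : {group gT}),
        #|G| = (2 ^ r * n0)%N -> ~~ solvable G ->
        has_nonabelian_comp_factor G n0).
Proof.
move=> n0p h1 h2 h3 h4 r; elim: r => [|r IH].
  by apply: step => // r' /esym.
by apply: step => // r' [<-].
Qed.
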